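(* Let $H_1,H_2$ be separable Hilbert spaces, $M\in B(H_1\oplus H_2)$, and let $M_1:H_1\oplus H_2\to H_1$ and $M_2:H_1\oplus H_2\to H_2$ be the bounded linear operators such that $M(x\oplus y)=M_1(x\oplus y)\oplus M_2(x\oplus y)$ for all $x\oplus y\in H_1\oplus H_2$. Let $\{x_n\oplus y_n\}_{n\geqslant1}$ be a sequence in $H_1\oplus H_2$. If $\{x_n\oplus y_n\}_{n\geqslant1}$ is an $M$-frame for $H_1\oplus H_2$ with $M$-frame bounds $A$ and $B$, then: (i) for all $x\in H_1$, $A\|M_1^*(x)\|^2\leq\sum_{n=1}^{\infty}|\langle x,x_n\rangle|^2\leq B\|x\|^2$; (ii) for all $y\in H_2$, $A\|M_2^*(y)\|^2\leq\sum_{n=1}^{\infty}|\langle y,y_n\rangle|^2\leq B\|y\|^2$.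
   Context: $H_1\oplus H_2$ is the Hilbert space of pairs $x\oplus y$ with inner product $\langle x\oplus y,a\oplus b\rangle=\langle x,a\rangle+\langle y,b\rangle$. For a Hilbert space $H$ and $K\in B(H)$, a sequence $\{z_n\}_{n\geqslant1}$ in $H$ is a $K$-frame with bounds $A,B>0$ if $A\|K^*z\|^2\leq\sum_{n=1}^\infty|\langle z,z_n\rangle|^2\leq B\|z\|^2$ for all $z\in H$. *)

(* Defs.v *)
From mathcomp Require Import all_boot all_algebra.
From mathcomp Require Import complex.
From mathcomp Require Import all_classical all_reals all_analysis.
Set Implicit Arguments. Unset Strict Implicit. Unset Printing Implicit Defensive.
Import GRing.Theory Num.Theory.
Local Open Scope ring_scope.

Section Hilbert.
Variable R : realType.
Local Notation C := R[i].

Definition cabs2 (z : C) : R := complex.Re z ^+ 2 + complex.Im z ^+ 2.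

Variable V : lmodType C.
Variable ip : V -> V -> C.

Definition hnorm (x : V) : R := Num.sqrt (complex.Re (ip x x)).

Definition is_inner_product : Prop :=
  [/\ (forall (a : C) (x y z : V), ip (a *: x + y) z = a * ip x z + ip y z),
      (forall x y : V, ip y x = ((ip x y)^*)%C),
      (forall x : V, 0 <= complex.Re (ip x x)) &
      (forall x : V, ip x x = 0 -> x = 0)].

Definition hcomplete : Prop :=
  forall u : nat -> V,
    (forall e : R, 0 < e -> exists N : nat, forall m n : nat,
        (N <= m)%N -> (N <= n)%N -> hnorm (u m - u n) < e) ->
    exists l : V, forall e : R, 0 < e -> exists N : nat, forall n : nat,
        (N <= n)%N -> hnorm (u n - l) < e.

Definition hseparable : Prop :=
  exists d : nat -> V, forall (x : V) (e : R), 0 < e ->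
    exists n : nat, hnorm (x - d n) < e.

Definition separable_hilbert : Prop :=
  [/\ is_inner_product, hcomplete & hseparable].
End Hilbert.

Section Operators.
Variable R : realType.
Local Notation C := R[i].

Definition bounded_linear (V W : lmodType C) (ipV : V -> V -> C)
    (ipW : W -> W -> C) (T : V -> W) : Prop :=
  (forall (a : C) (x y : V), T (a *: x + y) = a *: T x + T y) /\
  exists c : R, forall x : V, hnorm ipW (T x) <= c * hnorm ipV x.

Definition is_adjoint (V W : lmodType C) (ipV : V -> V -> C)
    (ipW : W -> W -> C) (T : V -> W) (Ts : W -> V) : Prop :=
  forall (x : V) (y : W), ipW (T x) y = ipV x (Ts y).

Definition dsum_ip (V W : lmodType C) (ipV : V -> V -> C) (ipW : W -> W -> C)
    (u v : V * W) : C := ipV u.1 v.1 + ipW u.2 v.2.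

(* {z n} (n >= 1, here indexed from 0) is a K-frame for (H, ip) with bounds
   A, B:  A ||K^* z||^2 <= sum_n |<z, z_n>|^2 <= B ||z||^2 for all z,
   where K^* is the adjoint of K. *)
Definition is_K_frame (H : lmodType C) (ip : H -> H -> C) (K : H -> H)
    (zs : nat -> H) (A B : R) : Prop :=
  [/\ 0 < A, 0 < B &
   exists Ks : H -> H, is_adjoint ip ip K Ks /\
   forall z : H,
     ((A * hnorm ip (Ks z) ^+ 2)%:E <= \sum_(0 <= n <oo) (cabs2 (ip z (zs n)))%:E)%E /\
     (\sum_(0 <= n <oo) (cabs2 (ip z (zs n)))%:E <= (B * hnorm ip z ^+ 2)%:E)%E].
End Operators.

(* Main.v *)
Require Import Defs.
From mathcomp Require Import all_boot all_algebra.
From mathcomp Require Import complex.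
From mathcomp Require Import all_classical all_reals all_analysis.
Import GRing.Theory Num.Theory.
Local Open Scope ring_scope.

Lemma ip0l (R : realType) (H : lmodType R[i]) (ip : H -> H -> R[i]) :
  is_inner_product ip -> forall z, ip 0 z = 0.
Proof.
case=> lin _ _ _ z.
have := lin 1 0 0 z; rewrite scale1r addr0 mul1r => h.
have : ip 0 z - ip 0 z = ip 0 z + ip 0 z - ip 0 z by rewrite -h.
by rewrite subrr addrK.
Qed.

Lemma ip0r (R : realType) (H : lmodType R[i]) (ip : H -> H -> R[i]) :
  is_inner_product ip -> forall z, ip z 0 = 0.
Proof.
move=> hip z; have [_ sym _ _] := hip.
by rewrite sym ip0l // conjc0.
Qed.

Lemma dsum_sym (R : realType) (H1 H2 : lmodType R[i])
  (ip1 : H1 -> H1 -> R[i]) (ip2 : H2 -> H2 -> R[i]) :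
  is_inner_product ip1 -> is_inner_product ip2 ->
  forall u v, dsum_ip ip1 ip2 v u = ((dsum_ip ip1 ip2 u v)^*)%C.
Proof.
move=> [_ s1 _ _] [_ s2 _ _] u v.
by rewrite /dsum_ip s1 s2 rmorphD.
Qed.

Lemma adj_same (R : realType) (H : lmodType R[i]) (ip : H -> H -> R[i]) v w :
  (forall u v, ip v u = ((ip u v)^*)%C) ->
  (forall u, ip u v = ip u w) -> ip v v = ip w w.
Proof.
move=> sym h.
by rewrite h sym h -sym.
Qed.

Theorem proposition2p4 (R : realType) (H1 H2 : lmodType R[i])
  (ip1 : H1 -> H1 -> R[i]) (ip2 : H2 -> H2 -> R[i])
  (hH1 : separable_hilbert ip1) (hH2 : separable_hilbert ip2)
  (M : H1 * H2 -> H1 * H2)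
  (hM : bounded_linear (dsum_ip ip1 ip2) (dsum_ip ip1 ip2) M)
  (M1 : H1 * H2 -> H1) (M2 : H1 * H2 -> H2)
  (hM1 : bounded_linear (dsum_ip ip1 ip2) ip1 M1)
  (hM2 : bounded_linear (dsum_ip ip1 ip2) ip2 M2)
  (hMdec : forall u : H1 * H2, M u = (M1 u, M2 u))
  (M1s : H1 -> H1 * H2) (M2s : H2 -> H1 * H2)
  (hM1s : is_adjoint (dsum_ip ip1 ip2) ip1 M1 M1s)
  (hM2s : is_adjoint (dsum_ip ip1 ip2) ip2 M2 M2s)
  (xs : nat -> H1) (ys : nat -> H2) (A B : R) :
  is_K_frame (dsum_ip ip1 ip2) M (fun n => (xs n, ys n)) A B ->
  (forall x : H1,
     ((A * hnorm (dsum_ip ip1 ip2) (M1s x) ^+ 2)%:E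
        <= \sum_(0 <= n <oo) (cabs2 (ip1 x (xs n)))%:E)%E /\
     (\sum_(0 <= n <oo) (cabs2 (ip1 x (xs n)))%:E
        <= (B * hnorm ip1 x ^+ 2)%:E)%E) /\
  (forall y : H2,
     ((A * hnorm (dsum_ip ip1 ip2) (M2s y) ^+ 2)%:E
        <= \sum_(0 <= n <oo) (cabs2 (ip2 y (ys n)))%:E)%E /\
     (\sum_(0 <= n <oo) (cabs2 (ip2 y (ys n)))%:E
        <= (B * hnorm ip2 y ^+ 2)%:E)%E).
Proof.
case: hH1 => hi1 _ _; case: hH2 => hi2 _ _.
move=> [_ _ [Ks [hKs hF]]].
have sym := @dsum_sym R H1 H2 ip1 ip2 hi1 hi2.
split=> [x|y].
- have [h1 h2] := hF (x, 0).
  have ser : (\sum_(0 <= n <oo) (cabs2 (dsum_ip ip1 ip2 (x, 0) (xs n, ys n)))%:E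
      = \sum_(0 <= n <oo) (cabs2 (ip1 x (xs n)))%:E)%E.
    by apply: eq_eseriesr => n _; rewrite /dsum_ip /= ip0l // addr0.
  rewrite ser in h1 h2.
  have nK : hnorm (dsum_ip ip1 ip2) (Ks (x, 0)) = hnorm (dsum_ip ip1 ip2) (M1s x).
    rewrite /hnorm; suff -> : dsum_ip ip1 ip2 (Ks (x, 0)) (Ks (x, 0)) = dsum_ip ip1 ip2 (M1s x) (M1s x) by [].
    apply: (@adj_same R _ (dsum_ip ip1 ip2)) => [u v|u]; first exact: sym.
    by rewrite -hKs -hM1s hMdec /dsum_ip /= ip0r // addr0.
  have nx : hnorm (dsum_ip ip1 ip2) (x, 0) = hnorm ip1 x.
    by rewrite /hnorm /dsum_ip /= ip0l // addr0.
  by rewrite -nK -nx.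
- have [h1 h2] := hF (0, y).
  have ser : (\sum_(0 <= n <oo) (cabs2 (dsum_ip ip1 ip2 (0, y) (xs n, ys n)))%:E
      = \sum_(0 <= n <oo) (cabs2 (ip2 y (ys n)))%:E)%E.
    by apply: eq_eseriesr => n _; rewrite /dsum_ip /= ip0l // add0r.
  rewrite ser in h1 h2.
  have nK : hnorm (dsum_ip ip1 ip2) (Ks (0, y)) = hnorm (dsum_ip ip1 ip2) (M2s y).
    rewrite /hnorm; suff -> : dsum_ip ip1 ip2 (Ks (0, y)) (Ks (0, y)) = dsum_ip ip1 ip2 (M2s y) (M2s y) by [].
    apply: (@adj_same R _ (dsum_ip ip1 ip2)) => [u v|u]; first exact: sym.
    by rewrite -hKs -hM2s hMdec /dsum_ip /= ip0r // add0r.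
  have ny : hnorm (dsum_ip ip1 ip2) (0, y) = hnorm ip2 y.
    by rewrite /hnorm /dsum_ip /= ip0l // add0r.
  by rewrite -nK -ny.
Qed.
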